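(* Let $\mathbf G$ and $\mathbf H$ be power-associative loops. Then $\mathcal G^+(\mathbf G)\cong\mathcal G^+(\mathbf H)$ if and only if $\mathcal G^\pm(\mathbf G)\cong\mathcal G^\pm(\mathbf H)$.
   Context: A loop is power-associative if every subloop generated by one element is a group; powers are computed in $\langle x\rangle$. The $Z^\pm$-power graph $\mathcal G^{\pm}(\mathbf G)$ has vertex set $G$, distinct $x,y$ adjacent iff $y=x^n$ or $x=y^n$ for some $n\in\mathbb Z\setminus\{0\}$; the $N$-power graph $\mathcal G^{+}(\mathbf G)$ is defined the same way with $n$ a positive integer. *)

(* Defs.v *)
From Stdlib Require Import Arith.
Set Implicit Arguments.

(* A loop in the equational (universal-algebra) presentation:
   (L, *, \, /, 1) with x*(x\y)=y, x\(x*y)=y, (y/x)*x=y, (y*x)/x=y,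
   1*x = x = x*1.  This is equivalent to: a quasigroup with identity. *)
Record loop := Loop {
  carrier :> Type;
  mul : carrier -> carrier -> carrier;
  one : carrier;
  ldiv : carrier -> carrier -> carrier;
  rdiv : carrier -> carrier -> carrier;
  mul_ldiv : forall x y, mul x (ldiv x y) = y;
  ldiv_mul : forall x y, ldiv x (mul x y) = y;
  rdiv_mul : forall x y, mul (rdiv y x) x = y;
  mul_rdiv : forall x y, rdiv (mul y x) x = y;
  mul1l : forall x, mul one x = x;
  mul1r : forall x, mul x one = x
}.

Inductive gen {G : loop} (x : G) : G -> Prop :=
  | gen_x : gen x x
  | gen_one : gen x (one G)
  | gen_mul : forall a b, gen x a -> gen x b -> gen x (mul G a b)
  | gen_ldiv : forall a b, gen x a -> gen x b -> gen x (ldiv G a b)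
  | gen_rdiv : forall a b, gen x a -> gen x b -> gen x (rdiv G a b).

(* Power-associative: every one-generated subloop <x> is a group,
   i.e. multiplication is associative on <x> (a subloop that is
   associative is a group). *)
Definition power_associative (G : loop) : Prop :=
  forall x a b c : G, gen x a -> gen x b -> gen x c ->
    mul G (mul G a b) c = mul G a (mul G b c).

Fixpoint npow {G : loop} (x : G) (n : nat) : G :=
  match n with
  | 0 => one G
  | S k => mul G (npow x k) x
  end.

(* Negative powers: x^(-n) is the inverse of x^n in the group <x>,
   i.e. the unique z with x^n * z = 1. *)
Definition nnpow {G : loop} (x : G) (n : nat) : G := ldiv G (npow x n) (one G).

Definition is_pos_power {G : loop} (x y : G) : Prop :=
  exists n, 0 < n /\ y = npow x n.

Definition is_nz_power {G : loop} (x y : G) : Prop :=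
  exists n, 0 < n /\ (y = npow x n \/ y = nnpow x n).

Definition Npow_adj {G : loop} (x y : G) : Prop :=
  x <> y /\ (is_pos_power x y \/ is_pos_power y x).

Definition Zpow_adj {G : loop} (x y : G) : Prop :=
  x <> y /\ (is_nz_power x y \/ is_nz_power y x).

Definition graph_iso {A B : Type} (adjA : A -> A -> Prop) (adjB : B -> B -> Prop) : Prop :=
  exists (f : A -> B) (g : B -> A),
    (forall a, g (f a) = a) /\ (forall b, f (g b) = b) /\
    (forall a1 a2, adjA a1 a2 <-> adjB (f a1) (f a2)).

(* Main.v *)
Require Import Defs.
From Stdlib Require Import Arith Lia Classical ClassicalEpsilon FunctionalExtensionality PropExtensionality Bool.
Set Implicit Arguments.



Definition inv {G : loop} (w : G) : G := ldiv G w (one G).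

Lemma npow_gen (G : loop) (x y : G) n : gen x y -> gen x (npow y n).
Proof. intros H; induction n; simpl. apply gen_one. apply gen_mul; auto. Qed.

Lemma inv_gen (G : loop) (x y : G) : gen x y -> gen x (inv y).
Proof. intros H; unfold inv; apply gen_ldiv; auto; apply gen_one. Qed.

Lemma npow_add (G : loop) (PA : power_associative G) (x : G) m n :
  npow x (m + n) = mul G (npow x m) (npow x n).
Proof.
  induction n.
  - rewrite Nat.add_0_r; simpl; rewrite mul1r; auto.
  - rewrite Nat.add_succ_r; simpl; rewrite IHn.
    apply (PA x); try apply npow_gen; apply gen_x.
Qed.

Lemma npow1 (G : loop) (x : G) : npow x 1 = x.
Proof. simpl. apply mul1l. Qed.

Lemma npow_mul (G : loop) (PA : power_associative G) (x : G) m n :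
  npow (npow x m) n = npow x (m * n).
Proof.
  induction n.
  - rewrite Nat.mul_0_r; reflexivity.
  - simpl npow at 1. rewrite IHn, <- npow_add by auto. f_equal; lia.
Qed.

Lemma npow_one (G : loop) n : npow (one G) n = one G.
Proof. induction n; simpl; auto. rewrite IHn; apply mul1l. Qed.

Lemma inv_r (G : loop) (w : G) : mul G w (inv w) = one G.
Proof. apply mul_ldiv. Qed.

Lemma idem_one (G : loop) (a : G) : mul G a a = a -> a = one G.
Proof.
  intros H. transitivity (ldiv G a (mul G a a)). rewrite ldiv_mul; auto.
  rewrite H. rewrite <- (mul1r G a) at 2. rewrite ldiv_mul. auto.
Qed.

Lemma inv_l (G : loop) (PA : power_associative G) (x w : G) :
  gen x w -> mul G (inv w) w = one G.
Proof.
  intros Hw. apply idem_one.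
  assert (Hv : gen x (inv w)) by (apply inv_gen; auto).
  rewrite (PA x (inv w) w (mul G (inv w) w)); auto; try (apply gen_mul; auto).
  rewrite <- (PA x w (inv w) w); auto. rewrite inv_r, mul1l. auto.
Qed.

Lemma invinv (G : loop) (PA : power_associative G) (w : G) : inv (inv w) = w.
Proof.
  unfold inv at 1. rewrite <- (inv_l PA (gen_x w)). apply ldiv_mul.
Qed.

Lemma inv_inj (G : loop) (PA : power_associative G) (a b : G) : inv a = inv b -> a = b.
Proof. intros H. rewrite <- (invinv PA a), <- (invinv PA b), H; auto. Qed.

Lemma npow_S_l (G : loop) (PA : power_associative G) (x : G) n :
  npow x (S n) = mul G x (npow x n).
Proof. change (S n) with (1 + n). rewrite npow_add, npow1; auto. Qed.

Lemma inv_npow (G : loop) (PA : power_associative G) (x : G) n :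
  inv (npow x n) = npow (inv x) n.
Proof.
  assert (E : mul G (npow x n) (npow (inv x) n) = one G).
  { induction n.
    - simpl. apply mul1l.
    - rewrite npow_S_l by auto. simpl npow at 2.
      assert (g1 : gen x (npow x n)) by (apply npow_gen, gen_x).
      assert (g2 : gen x (inv x)) by (apply inv_gen, gen_x).
      assert (g3 : gen x (npow (inv x) n)) by (apply npow_gen; auto).
      rewrite (PA x x (npow x n) _); auto; try (apply gen_mul; auto); try apply gen_x.
      rewrite <- (PA x (npow x n) (npow (inv x) n) (inv x)); auto.
      rewrite IHn, mul1l. apply inv_r. }
  unfold inv at 1. rewrite <- E. apply ldiv_mul.
Qed.

Definition tor {G : loop} (x : G) := exists k, 0 < k /\ npow x k = one G.

Lemma pow_cancel (G : loop) (PA : power_associative G) (x : G) m k :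
  npow x (m + k) = npow x m -> npow x k = one G.
Proof.
  intros H. rewrite npow_add in H by auto.
  rewrite <- (mul1r G (npow x m)) in H at 2.
  rewrite <- (ldiv_mul G (npow x m) (npow x k)), H, ldiv_mul. auto.
Qed.

Lemma inj_pow (G : loop) (PA : power_associative G) (x : G) i j :
  ~ tor x -> npow x i = npow x j -> i = j.
Proof.
  intros Ht H. destruct (Nat.lt_trichotomy i j) as [h|[h|h]]; auto; exfalso; apply Ht.
  - exists (j - i); split; [lia|]. apply (pow_cancel PA x i).
    replace (i + (j - i)) with j by lia; auto.
  - exists (i - j); split; [lia|]. apply (pow_cancel PA x j).
    replace (j + (i - j)) with i by lia; auto.
Qed.

Definition PC {G : loop} (a b : G) :=
  exists m n, 0 < m /\ 0 < n /\ npow a m = npow b n.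

Lemma PC_sym (G : loop) (a b : G) : PC a b -> PC b a.
Proof. intros (m & n & h1 & h2 & h3). exists n, m; auto. Qed.

Lemma PC_trans (G : loop) (PA : power_associative G) (a b c : G) :
  PC a b -> PC b c -> PC a c.
Proof.
  intros (m & n & h1 & h2 & h3) (p & q & h4 & h5 & h6).
  exists (m * p), (q * n). split; [nia|split;[nia|]].
  rewrite <- !npow_mul by auto. rewrite h3, !npow_mul by auto.
  rewrite Nat.mul_comm, <- npow_mul, h6, npow_mul by auto. auto.
Qed.

Inductive conn {V : Type} (R : V -> V -> Prop) : V -> V -> Prop :=
| cref : forall x, conn R x x
| cstep : forall x y z, R x y -> conn R y z -> conn R x z.

Definition Dv (i j : nat) : Prop :=
  i <> j /\ ((exists n, j = i * n) \/ (exists n, i = j * n)).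

Record PG (V : Type) := mkPG {
 N : V -> V -> Prop; s : V -> V; e : V;
 Nsym : forall x y, N x y -> N y x;
 Nirr : forall x y, N x y -> x <> y;
 ss : forall x, s (s x) = x;
 sN : forall x y, N x y -> N (s x) (s y);
 se : s e = e;
 tswap : forall x, conn N x (s x) -> conn N e x;
 onT : forall x y, conn N e x -> conn N e y -> x <> y -> (x = s y \/ N x (s y)) -> N x y;
 dom_e : forall x, conn N e x -> x = e \/ N e x;
 sep : forall x y, ~ conn N e x -> N x y ->
   exists z, (N x z /\ y <> z /\ ~ N y z) \/ (N y z /\ x <> z /\ ~ N x z);
 enum : forall u, ~ conn N e u -> (forall y, conn N u y -> y = u \/ N u y) ->
   exists p : nat -> V, p 0 = u /\ (forall i j, p i = p j -> i = j) /\
     (forall y, conn N u y <-> exists k, y = p k) /\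
     (forall i j, N (p i) (p j) <-> Dv (S i) (S j)) }.

Definition Zr {V} (P : PG V) (x y : V) : Prop :=
  x <> y /\ (N P x y \/ x = s P y \/ N P x (s P y)).

Lemma conn_snoc {V} (R : V -> V -> Prop) x y z : conn R x y -> R y z -> conn R x z.
Proof. induction 1; intros. apply cstep with z; auto; apply cref. apply cstep with y; auto. Qed.

Lemma conn_trans {V} (R : V -> V -> Prop) x y z : conn R x y -> conn R y z -> conn R x z.
Proof. induction 1; intros; auto. apply cstep with y; auto. Qed.

Lemma conn_sym {V} (R : V -> V -> Prop) (Rs : forall x y, R x y -> R y x) x y :
  conn R x y -> conn R y x.
Proof. induction 1. apply cref. apply conn_snoc with y; auto. Qed.

Lemma Npow_PC (G : loop) (x y : G) : Npow_adj x y -> PC x y.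
Proof.
  intros [_ [(n & hn & ->) | (n & hn & ->)]].
  - exists n, 1; repeat split; try lia. rewrite npow1; auto.
  - exists 1, n; repeat split; try lia. rewrite npow1; auto.
Qed.

Lemma conn_PC (G : loop) (PA : power_associative G) (x y : G) :
  conn (@Npow_adj G) x y -> PC x y.
Proof.
  induction 1. exists 1, 1; auto.
  eapply PC_trans; eauto. apply Npow_PC; auto.
Qed.

Lemma tor_conn (G : loop) (PA : power_associative G) (x : G) :
  tor x <-> conn (@Npow_adj G) (one G) x.
Proof.
  split.
  - intros (k & hk & h). destruct (classic (x = one G)) as [->|hne]. apply cref.
    apply cstep with x; [|apply cref]. split; auto. right; exists k; auto.
  - intros H. apply conn_PC in H; auto. destruct H as (m & n & h1 & h2 & h3).
    exists n; split; auto. rewrite <- h3, npow_one; auto.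
Qed.

Lemma tor_inv_pow (G : loop) (PA : power_associative G) (y : G) :
  tor y -> exists j, inv y = npow y j.
Proof.
  intros (k & hk & h). exists (k - 1).
  unfold inv. rewrite <- h. replace k with (S (k - 1)) at 1 by lia.
  rewrite npow_S_l by auto. apply ldiv_mul.
Qed.

Lemma tor_pos (G : loop) (y : G) j : tor y -> exists n, 0 < n /\ npow y j = npow y n.
Proof.
  intros (k & hk & h). destruct j.
  - exists k; split; [auto|]. rewrite h; auto.
  - exists (S j); split; auto; lia.
Qed.

Lemma tor_pow (G : loop) (PA : power_associative G) (y : G) k : tor y -> tor (npow y k).
Proof.
  intros (m & hm & h). exists m; split; auto. rewrite npow_mul, Nat.mul_comm, <- (npow_mul PA y m k), h, npow_one; auto.
Qed.

Lemma tor_root (G : loop) (PA : power_associative G) (y : G) k : 0 < k -> tor (npow y k) -> tor y.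
Proof.
  intros hk (m & hm & h). exists (k * m); split. nia. rewrite <- npow_mul; auto.
Qed.

Lemma inv_one (G : loop) : inv (one G) = one G.
Proof. unfold inv. rewrite <- (mul1l G (one G)) at 2. apply ldiv_mul. Qed.

Lemma PC_inv_tor (G : loop) (PA : power_associative G) (x : G) : PC x (inv x) -> tor x.
Proof.
  intros (m & n & h1 & h2 & h3). exists (m + n); split. lia.
  rewrite npow_add, h3, <- inv_npow by auto. apply (inv_l PA (x:=x)). apply npow_gen, gen_x.
Qed.

Lemma Zpow_iff (G : loop) (PA : power_associative G) (x y : G) :
  Zpow_adj x y <-> x <> y /\ (Npow_adj x y \/ x = inv y \/ Npow_adj x (inv y)).
Proof.
  split.
  - intros [hne [(n & hn & [h|h]) | (n & hn & [h|h])]]; split; auto.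
    + left; split; auto. left; exists n; auto.
    + unfold nnpow in h. fold (inv (npow x n)) in h.
      assert (inv y = npow x n) by (rewrite h, invinv; auto).
      destruct (classic (x = inv y)); auto. right; right; split; auto. left; exists n; auto.
    + left; split; auto. right; exists n; auto.
    + unfold nnpow in h. fold (inv (npow y n)) in h. rewrite inv_npow in h by auto.
      destruct (classic (x = inv y)); auto. right; right; split; auto. right; exists n; auto.
  - intros [hne [h|[h|h]]]; split; auto.
    + destruct h as [_ [(n&hn&h)|(n&hn&h)]]; [left|right]; exists n; auto.
    + right. exists 1; split; auto. right. unfold nnpow. rewrite npow1; auto.
    + destruct h as [_ [(n&hn&h)|(n&hn&h)]].
      * left. exists n; split; auto. right. unfold nnpow. fold (inv (npow x n)).
        rewrite <- h, invinv; auto.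
      * right. exists n; split; auto. right. unfold nnpow. fold (inv (npow y n)).
        rewrite inv_npow; auto.
Qed.

Lemma loop_sN (G : loop) (PA : power_associative G) (x y : G) :
  Npow_adj x y -> Npow_adj (inv x) (inv y).
Proof.
  intros [hne h]. split. intros E; apply hne, (inv_inj PA); auto.
  destruct h as [(n&hn&->)|(n&hn&->)]; [left|right]; exists n; split; auto; apply inv_npow; auto.
Qed.

Lemma loop_onT (G : loop) (PA : power_associative G) (x y : G) :
  conn (@Npow_adj G) (one G) x -> conn (@Npow_adj G) (one G) y -> x <> y ->
  (x = inv y \/ Npow_adj x (inv y)) -> Npow_adj x y.
Proof.
  intros hx hy hne h. apply tor_conn in hx; apply tor_conn in hy; auto.
  split; auto.
  destruct (tor_inv_pow PA hx) as [jx ex]. destruct (tor_inv_pow PA hy) as [jy ey].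
  destruct h as [h|[_ [(n&hn&h)|(n&hn&h)]]].
  - right. rewrite ey in h. destruct (tor_pos jy hy) as (n & hn & e2). exists n; split; auto; congruence.
  - left. assert (E : y = npow x (jx * n)).
    { rewrite <- (invinv PA y), h, inv_npow, ex, npow_mul; auto. }
    destruct (tor_pos (jx * n) hx) as (m & hm & e2). exists m; split; auto; congruence.
  - right. assert (E : x = npow y (jy * n)).
    { rewrite h, ey, npow_mul; auto. }
    destruct (tor_pos (jy * n) hy) as (m & hm & e2). exists m; split; auto; congruence.
Qed.

Lemma loop_sep_aux (G : loop) (PA : power_associative G) (x : G) k :
  ~ tor x -> npow x k <> x -> 0 < k ->
  Npow_adj x (npow x (S k)) /\ npow x k <> npow x (S k) /\ ~ Npow_adj (npow x k) (npow x (S k)).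
Proof.
  intros ht hne hk.
  assert (k <> 1) by (intro; subst; apply hne, npow1).
  split; [|split].
  - split. intro E. rewrite <- (npow1 _ x) in E at 1. apply inj_pow in E; auto. lia.
    left. exists (S k); split; auto; lia.
  - intro E. apply inj_pow in E; auto; lia.
  - intros [_ [(n&hn&h)|(n&hn&h)]]; rewrite npow_mul in h by auto; apply inj_pow in h; auto; destruct n as [|[|n]]; nia.
Qed.

Lemma loop_sep (G : loop) (PA : power_associative G) (x y : G) :
  ~ conn (@Npow_adj G) (one G) x -> Npow_adj x y ->
  exists z, (Npow_adj x z /\ y <> z /\ ~ Npow_adj y z) \/ (Npow_adj y z /\ x <> z /\ ~ Npow_adj x z).
Proof.
  intros hx [hne [(k&hk&->)|(k&hk&->)]].
  - rewrite <- tor_conn in hx by auto.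
    exists (npow x (S k)). left. apply loop_sep_aux; auto.
  - rewrite <- tor_conn in hx by auto.
    assert (hy : ~ tor y) by (intro; apply hx, tor_pow; auto).
    exists (npow y (S k)). right. apply loop_sep_aux; auto.
Qed.

Lemma loop_enum (G : loop) (PA : power_associative G) (u : G) :
  ~ conn (@Npow_adj G) (one G) u ->
  (forall y, conn (@Npow_adj G) u y -> y = u \/ Npow_adj u y) ->
  exists p : nat -> G, p 0 = u /\ (forall i j, p i = p j -> i = j) /\
     (forall y, conn (@Npow_adj G) u y <-> exists k, y = p k) /\
     (forall i j, Npow_adj (p i) (p j) <-> Dv (S i) (S j)).
Proof.
  intros hu hdom. rewrite <- tor_conn in hu by auto.
  exists (fun k => npow u (S k)). split; [apply npow1|split;[|split]].
  - intros i j E. apply inj_pow in E; auto.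
  - intros y; split.
    + intros hc. destruct (hdom y hc) as [->|[hne [(n&hn&->)|(n&hn&hy)]]].
      * exists 0. symmetry; apply npow1.
      * exists (n - 1). f_equal. lia.
      * exfalso. assert (hyt : ~ tor y) by (intro; apply hu; rewrite hy; apply tor_pow; auto).
        assert (n <> 1) by (intro; subst; apply hne; apply npow1).
        assert (hc3 : conn (@Npow_adj G) u (npow y (S n))).
        { apply conn_snoc with y; auto. split.
          intro E; rewrite <- (npow1 _ y) in E at 1; apply inj_pow in E; auto; lia.
          left; exists (S n); split; auto; lia. }
        destruct (hdom _ hc3) as [E|[_ [(m&hm&E)|(m&hm&E)]]].
        -- rewrite hy in E. apply inj_pow in E; auto. lia.
        -- rewrite hy, npow_mul in E by auto. apply inj_pow in E; auto; destruct m as [|[|m]]; nia.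
        -- rewrite hy, npow_mul in E by auto. apply inj_pow in E; auto; destruct m as [|[|m]]; nia.
    + intros [k ->]. destruct k. rewrite npow1; apply cref.
      apply cstep with (npow u (S (S k))); [|apply cref]. split.
      intro E. rewrite <- (npow1 _ u) in E at 1. apply inj_pow in E; auto. lia.
      left; exists (S (S k)); split; auto; lia.
  - intros i j. split.
    + intros [hne [(n&hn&h)|(n&hn&h)]]; rewrite npow_mul in h by auto; apply inj_pow in h; auto;
        split; try (intro E; apply hne; rewrite E; auto); [left|right]; exists n; auto.
    + intros [hne [(n&h)|(n&h)]]; split; try (intro E; apply inj_pow in E; auto).
      * left. exists n. split. destruct n; lia. rewrite npow_mul, h; auto.
      * right. exists n. split. destruct n; lia. rewrite npow_mul, h; auto.
Qed.

Lemma Npow_sym (G : loop) (x y : G) : Npow_adj x y -> Npow_adj y x.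
Proof. intros [h1 [h2|h2]]; split; auto. Qed.

Lemma Npow_irr (G : loop) (x y : G) : Npow_adj x y -> x <> y.
Proof. intros [h _]; auto. Qed.

Lemma loop_tswap (G : loop) (PA : power_associative G) (x : G) :
  conn (@Npow_adj G) x (inv x) -> conn (@Npow_adj G) (one G) x.
Proof. intros h. apply tor_conn; auto. apply PC_inv_tor; auto. apply conn_PC; auto. Qed.

Lemma loop_dom (G : loop) (PA : power_associative G) (x : G) :
  conn (@Npow_adj G) (one G) x -> x = one G \/ Npow_adj (one G) x.
Proof.
  intros h. apply tor_conn in h; auto. destruct (classic (x = one G)); auto.
  right. destruct h as (k&hk&h). split; auto. right. exists k; auto.
Qed.

Definition loopPG (G : loop) (PA : power_associative G) : PG G :=
  {| N := @Npow_adj G; s := @inv G; e := one G; Nsym := @Npow_sym G; Nirr := @Npow_irr G;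
     ss := invinv PA; sN := loop_sN PA; se := inv_one G; tswap := loop_tswap PA;
     onT := loop_onT PA; dom_e := loop_dom PA; sep := loop_sep PA; enum := loop_enum PA |}.

Lemma loop_Zr (G : loop) (PA : power_associative G) (x y : G) :
  Zpow_adj x y <-> Zr (loopPG PA) x y.
Proof. unfold Zr; simpl. apply Zpow_iff; auto. Qed.

Lemma graph_iso_ext A B (R1 R1' : A -> A -> Prop) (R2 R2' : B -> B -> Prop) :
  (forall x y, R1 x y <-> R1' x y) -> (forall x y, R2 x y <-> R2' x y) ->
  graph_iso R1 R2 -> graph_iso R1' R2'.
Proof.
  intros h1 h2 (f & g & hfg & hgf & hr). exists f, g; repeat split; auto;
  intros H; [apply h1 in H; apply hr in H; apply h2; auto | apply h1; apply hr; apply h2; auto].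
Qed.

Lemma graph_iso_trans A B C (R1 : A -> A -> Prop) (R2 : B -> B -> Prop) (R3 : C -> C -> Prop) :
  graph_iso R1 R2 -> graph_iso R2 R3 -> graph_iso R1 R3.
Proof.
  intros (f & g & h1 & h2 & h3) (f' & g' & h1' & h2' & h3').
  exists (fun x => f' (f x)), (fun z => g (g' z)); repeat split; intros.
  rewrite h1'; auto. rewrite h2; auto.
  apply h3', h3; auto. apply h3, h3'; auto.
Qed.

Lemma graph_iso_sym A B (R1 : A -> A -> Prop) (R2 : B -> B -> Prop) :
  graph_iso R1 R2 -> graph_iso R2 R1.
Proof.
  intros (f & g & h1 & h2 & h3). exists g, f; split; auto; split; auto; intros a1 a2; split; intros H.
  - apply h3; rewrite !h2; auto.
  - rewrite <- (h2 a1), <- (h2 a2). apply h3; auto.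
Qed.

Lemma conn_map {V W} (R : V -> V -> Prop) (R' : W -> W -> Prop) (f : V -> W)
  (H : forall x y, R x y -> R' (f x) (f y)) x y : conn R x y -> conn R' (f x) (f y).
Proof. induction 1. apply cref. apply cstep with (f y); auto. Qed.

Lemma conn_ext {V} (R R' : V -> V -> Prop) (H : forall x y, R x y -> R' x y) x y :
  conn R x y -> conn R' x y.
Proof. intros h; apply (@conn_map V V R R' (fun z => z) H) in h; auto. Qed.

Record Inv2 {V} (R : V -> V -> Prop) (Tp : V -> Prop) (s t : V -> V) : Prop := {
 i_Rsym : forall x y, R x y -> R y x;
 i_ss : forall x, s (s x) = x; i_tt : forall x, t (t x) = x;
 i_sR : forall x y, R x y -> R (s x) (s y); i_tR : forall x y, R x y -> R (t x) (t y);
 i_Ts : forall x, Tp (s x) <-> Tp x; i_Tt : forall x, Tp (t x) <-> Tp x;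
 i_TR : forall x y, R x y -> (Tp x <-> Tp y);
 i_sc : forall x, ~ Tp x -> ~ conn R x (s x);
 i_tc : forall x, ~ Tp x -> ~ conn R x (t x) }.

Inductive Wk {V} (R : V -> V -> Prop) (s t : V -> V) : V -> V -> bool -> Prop :=
| W0 x : Wk R s t x x false
| WN x y z b : R x y -> Wk R s t y z b -> Wk R s t x z b
| Ws x z b : Wk R s t (s x) z b -> Wk R s t x z (negb b)
| Wt x z b : Wk R s t (t x) z b -> Wk R s t x z (negb b).

Fixpoint iter {V} (f : V -> V) n x := match n with 0 => x | S n => iter f n (f x) end.

Lemma iter_S' {V} (f : V -> V) n x : iter f (S n) x = f (iter f n x).
Proof. revert x; induction n; intros; simpl; auto. rewrite <- IHn. auto. Qed.

Lemma W_trans {V} R s t (x y z : V) b b' : Wk R s t x y b -> Wk R s t y z b' -> Wk R s t x z (xorb b b').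
Proof.
  induction 1; intros; simpl; auto.
  - apply WN with y; auto.
  - replace (xorb (negb b) b') with (negb (xorb b b')) by (destruct b, b'; auto). apply Ws; auto.
  - replace (xorb (negb b) b') with (negb (xorb b b')) by (destruct b, b'; auto). apply Wt; auto.
Qed.

Lemma W_sym {V} R (Tp : V -> Prop) s t (I : Inv2 R Tp s t) x y b : Wk R s t x y b -> Wk R s t y x b.
Proof.
  induction 1.
  - apply W0.
  - replace b with (xorb b false) by (destruct b; auto). apply W_trans with y; auto.
    apply WN with x; [apply (i_Rsym I); auto|apply W0].
  - replace (negb b) with (xorb b true) by (destruct b; auto). apply W_trans with (s x); auto.
    replace true with (negb false) by auto. apply Ws. rewrite (i_ss I). apply W0.
  - replace (negb b) with (xorb b true) by (destruct b; auto). apply W_trans with (t x); auto.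
    replace true with (negb false) by auto. apply Wt. rewrite (i_tt I). apply W0.
Qed.

Lemma W_T {V} R (Tp : V -> Prop) s t (I : Inv2 R Tp s t) x y b : Wk R s t x y b -> (Tp x <-> Tp y).
Proof.
  induction 1; try tauto.
  - rewrite <- IHWk. apply (i_TR I); auto.
  - rewrite <- IHWk. symmetry; apply (i_Ts I).
  - rewrite <- IHWk. symmetry; apply (i_Tt I).
Qed.


Lemma connF {V} {R : V -> V -> Prop} {f : V -> V} (H : forall x y, R x y -> R (f x) (f y)) {x y} :
  conn R x y -> conn R (f x) (f y).
Proof. apply (@conn_map V V R R f H). Qed.

Lemma iter_conn {V} (R : V -> V -> Prop) (f : V -> V) (Hf : forall x y, R x y -> R (f x) (f y)) n x y :
  conn R x y -> conn R (iter f n x) (iter f n y).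
Proof.
  revert x y; induction n; intros x y h; simpl; auto. apply IHn. apply (@conn_map V V R R f Hf); auto.
Qed.

Lemma W_char {V} R (Tp : V -> Prop) s t (I : Inv2 R Tp s t) x y b :
  Wk R s t x y b ->
  exists n, (b = false /\ (conn R (iter (fun z => t (s z)) n x) y \/ conn R (iter (fun z => s (t z)) n x) y))
         \/ (b = true /\ (conn R (iter (fun z => t (s z)) n (s x)) y \/ conn R (iter (fun z => s (t z)) n (s x)) y)).
Proof.
  assert (Hr : forall x y, R x y -> R (t (s x)) (t (s y))) by (intros; apply (i_tR I), (i_sR I); auto).
  assert (Hri : forall x y, R x y -> R (s (t x)) (s (t y))) by (intros; apply (i_sR I), (i_tR I); auto).
  induction 1.
  - exists 0. left. split; auto. left. apply cref.
  - destruct IHWk as [n [[-> [h|h]]|[-> [h|h]]]]; exists n; [left|left|right|right]; split; auto;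
      [left|right|left|right]; eapply conn_trans; try apply h; apply iter_conn; auto;
      try (apply cstep with y; auto; apply cref);
      (apply cstep with (s y); [apply (i_sR I); auto|apply cref]).
  - destruct IHWk as [n [[-> [h|h]]|[-> [h|h]]]]; exists n.
    + right; split; [reflexivity|]. left; auto.
    + right; split; [reflexivity|]. right; auto.
    + left; split; [reflexivity|]. rewrite (i_ss I) in h; left; auto.
    + left; split; [reflexivity|]. rewrite (i_ss I) in h; right; auto.
  - destruct IHWk as [n [[-> [h|h]]|[-> [h|h]]]].
    + exists (S n). right; split; [reflexivity|]. left. simpl. rewrite (i_ss I). auto.
    + destruct n as [|m].
      * exists 1. right; split; [reflexivity|]. left. simpl. rewrite (i_ss I). auto.
      * exists m. right; split; [reflexivity|]. right. simpl in h. rewrite (i_tt I) in h. auto.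
    + destruct n as [|m].
      * exists 1. left; split; [reflexivity|]. right. auto.
      * exists m. left; split; [reflexivity|]. left. simpl in h. rewrite (i_ss I), (i_tt I) in h. auto.
    + exists (S n). left; split; [reflexivity|]. right. auto.
Qed.

Lemma no_odd {V} R (Tp : V -> Prop) s t (I : Inv2 R Tp s t) :
  forall n x, ~ Tp x -> ~ conn R (iter (fun z => t (s z)) n (s x)) x /\
                        ~ conn R (iter (fun z => s (t z)) n (s x)) x.
Proof.
  assert (Hr : forall x y, R x y -> R (t (s x)) (t (s y))) by (intros; apply (i_tR I), (i_sR I); auto).
  assert (Hri : forall x y, R x y -> R (s (t x)) (s (t y))) by (intros; apply (i_sR I), (i_tR I); auto).
  assert (Csym : forall x y, conn R x y -> conn R y x) by (apply conn_sym, (i_Rsym I)).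
  assert (Hns : forall x, ~ Tp x -> ~ Tp (s x)) by (intros x h; rewrite (i_Ts I); auto).
  assert (Hnt : forall x, ~ Tp x -> ~ Tp (t x)) by (intros x h; rewrite (i_Tt I); auto).
  intros n.
  enough (forall x, ~ Tp x -> (~ conn R (iter (fun z => t (s z)) n (s x)) x /\
                        ~ conn R (iter (fun z => s (t z)) n (s x)) x) /\
                       (~ conn R (iter (fun z => t (s z)) (S n) (s x)) x /\
                        ~ conn R (iter (fun z => s (t z)) (S n) (s x)) x)) by (intros x hx; apply H; auto).
  induction n; intros x hx.
  - split; split; simpl.
    + intros h. apply (i_sc I hx). apply Csym; auto.
    + intros h. apply (i_sc I hx). apply Csym; auto.
    + rewrite (i_ss I). intros h. apply (i_tc I hx). apply Csym; auto.
    + intros h. apply (connF (i_sR I)) in h. rewrite !(i_ss I) in h.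
      apply (i_tc I (Hns _ hx)). apply Csym; auto.
  - split; [apply IHn; auto|]. split.
    + intros h. rewrite iter_S' in h. simpl in h. rewrite (i_ss I) in h.
      apply (connF Hri) in h. repeat rewrite ?(i_ss I), ?(i_tt I) in h.
      apply (proj1 (proj1 (IHn (s (t x)) (Hns _ (Hnt _ hx))))). rewrite (i_ss I). auto.
    + intros h. rewrite iter_S' in h. simpl in h.
      apply (connF Hr) in h. repeat rewrite ?(i_ss I), ?(i_tt I) in h.
      apply (proj2 (proj1 (IHn (t (s x)) (Hnt _ (Hns _ hx))))). auto.
Qed.

Lemma no_odd_W {V} R (Tp : V -> Prop) s t (I : Inv2 R Tp s t) x : ~ Tp x -> ~ Wk R s t x x true.
Proof.
  intros hx h. apply (W_char I) in h. destruct h as [n [[E _]|[_ [h|h]]]]. discriminate.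
  - apply (proj1 (no_odd I n x hx)); auto.
  - apply (proj2 (no_odd I n x hx)); auto.
Qed.

Lemma W_uniq {V} R (Tp : V -> Prop) s t (I : Inv2 R Tp s t) x y b b' :
  ~ Tp x -> Wk R s t x y b -> Wk R s t x y b' -> b = b'.
Proof.
  intros hx h1 h2. apply (W_sym I) in h1. pose proof (W_trans h2 h1) as h.
  destruct b, b'; auto; exfalso; apply (no_odd_W I hx); auto.
Qed.

Lemma coloring {V} R (Tp : V -> Prop) s t (I : Inv2 R Tp s t) (d : V) :
  exists c : V -> bool, (forall x y, ~ Tp x -> R x y -> c x = c y) /\
    (forall x, ~ Tp x -> c (s x) = negb (c x)) /\ (forall x, ~ Tp x -> c (t x) = negb (c x)).
Proof.
  set (rep := fun x => epsilon (inhabits d) (fun y => exists b, Wk R s t x y b)).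
  set (c := fun x => if excluded_middle_informative (Wk R s t (rep x) x false) then true else false).
  assert (rep_spec : forall x, exists b, Wk R s t x (rep x) b).
  { intros x. apply (epsilon_spec (inhabits d) (fun y => exists b, Wk R s t x y b)). exists x, false. apply W0. }
  assert (rep_eq : forall x y b, Wk R s t x y b -> rep x = rep y).
  { intros x y b h. unfold rep. f_equal. apply functional_extensionality. intros z.
    apply propositional_extensionality. split; intros [b' h'].
    - exists (xorb b b'). apply W_trans with x; auto. apply (W_sym I); auto.
    - exists (xorb b b'). apply W_trans with y; auto. }
  assert (val : forall x b, ~ Tp x -> Wk R s t (rep x) x b -> c x = negb b).
  { intros x b hx h. assert (hr : ~ Tp (rep x)) by (rewrite (W_T I h); auto).
    unfold c. destruct excluded_middle_informative as [h'|h'].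
    - rewrite (W_uniq I hr h h'). auto.
    - destruct b; try contradiction; auto. }
  assert (rel : forall x y b, ~ Tp x -> Wk R s t x y b -> c y = xorb (c x) b).
  { intros x y b hx h. destruct (rep_spec x) as [b0 h0]. apply (W_sym I) in h0.
    rewrite (val x b0 hx h0).
    assert (hy : ~ Tp y) by (rewrite <- (W_T I h); auto).
    rewrite (val y (xorb b0 b) hy). destruct b0, b; auto.
    rewrite <- (rep_eq x y b h). apply W_trans with x; auto. }
  exists c. split; [|split].
  - intros x y hx h. rewrite (rel x y false hx). destruct (c x); auto. apply WN with y; auto. apply W0.
  - intros x hx. rewrite (rel x (s x) true hx). destruct (c x); auto.
    replace true with (negb false) by auto. apply Ws. apply W0.
  - intros x hx. rewrite (rel x (t x) true hx). destruct (c x); auto.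
    replace true with (negb false) by auto. apply Wt. apply W0.
Qed.

Definition T {V} (P : PG V) x := conn (N P) (e P) x.

Lemma Csym {V} {P : PG V} x y : conn (N P) x y -> conn (N P) y x.
Proof. apply conn_sym, Nsym. Qed.

Lemma T_conn {V} {P : PG V} x y : T P x -> conn (N P) x y -> T P y.
Proof. unfold T; intros; eapply conn_trans; eauto. Qed.

Lemma T_N {V} {P : PG V} x y : N P x y -> (T P x <-> T P y).
Proof.
  intros h; split; intros h'; eapply T_conn; eauto.
  - apply cstep with y; auto using cref.
  - apply cstep with x; auto using cref, Nsym.
Qed.

Lemma T_s {V} {P : PG V} x : T P (s P x) <-> T P x.
Proof.
  unfold T. split; intros h.
  - apply (connF (sN P)) in h. rewrite ss, se in h. auto.
  - apply (connF (sN P)) in h. rewrite se in h. auto.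
Qed.

Lemma nT_sc {V} {P : PG V} x : ~ T P x -> ~ conn (N P) x (s P x).
Proof. intros h h'. apply h, tswap; auto. Qed.

Lemma nT_ne {V} {P : PG V} x : ~ T P x -> s P x <> x.
Proof. intros h E. apply (nT_sc h). rewrite E. apply cref. Qed.

Lemma s_inj {V} {P : PG V} x y : s P x = s P y -> x = y.
Proof. intros E. rewrite <- (ss P x), <- (ss P y), E; auto. Qed.

Lemma sN_iff {V} {P : PG V} x y : N P (s P x) (s P y) <-> N P x y.
Proof. split; intros h; [rewrite <- (ss P x), <- (ss P y)|]; apply sN; auto. Qed.

Lemma Zr_s {V} {P : PG V} x y : Zr P (s P x) (s P y) <-> Zr P x y.
Proof.
  unfold Zr. rewrite !sN_iff, ss. split; intros [h1 h2]; split.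
  - intro E; apply h1; rewrite E; auto.
  - destruct h2 as [h|[h|h]]; auto. right; left. rewrite <- h, ss; auto.
  - intro E; apply h1; apply s_inj in E; auto.
  - destruct h2 as [h|[h|h]]; auto. right; left. rewrite h, ss; auto.
Qed.

Lemma Zr_sym {V} {P : PG V} x y : Zr P x y -> Zr P y x.
Proof.
  intros [h1 [h|[h|h]]]; split; auto.
  - left; apply Nsym; auto.
  - right; left. rewrite h, ss; auto.
  - right; right. apply Nsym. rewrite <- (ss P y). apply sN; auto.
Qed.

Lemma Zr_T {V} {P : PG V} x y : Zr P x y -> (T P x <-> T P y).
Proof.
  intros [_ [h|[h|h]]].
  - apply T_N; auto.
  - subst. rewrite T_s; tauto.
  - rewrite (T_N _ _ h), T_s; tauto.
Qed.

Lemma Zr_onT {V} {P : PG V} x y : T P x -> (Zr P x y <-> N P x y).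
Proof.
  intros hx. split.
  - intros h. assert (hy : T P y) by (apply (Zr_T h); auto).
    destruct h as [h1 [h2|h2]]; auto. apply (onT P); auto.
  - intros h. split. apply (Nirr P); auto. left; auto.
Qed.

Lemma Zr_col {V} (P : PG V) (c : V -> bool)
  (hN : forall x y, ~ T P x -> N P x y -> c x = c y)
  (hs : forall x, ~ T P x -> c (s P x) = negb (c x)) x y : ~ T P x -> ~ T P y ->
  (c x = c y -> (Zr P x y <-> N P x y)) /\
  (c x <> c y -> (Zr P x y <-> (x = s P y \/ N P x (s P y)))).
Proof.
  intros hx hy. split; intros hc; split.
  - intros [h1 [h|[h|h]]]; auto; exfalso.
    + subst x. rewrite hs in hc; auto. destruct (c y); discriminate.
    + apply hN in h; auto. rewrite hs in h; auto. rewrite h in hc. destruct (c y); discriminate.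
  - intros h. split. apply (Nirr P); auto. left; auto.
  - intros [h1 [h|h]]; auto. exfalso. apply hc, hN; auto.
  - intros h. split; auto. intro E; subst; auto.
Qed.

Lemma T_ext {V} (P P' : PG V) (HN : forall x y, N P x y <-> N P' x y) (He : e P = e P') x :
  T P x <-> T P' x.
Proof.
  unfold T; rewrite He; split; apply conn_ext; intros; apply HN; auto.
Qed.

Lemma coreN2Z {V} (P P' : PG V) (HN : forall x y, N P x y <-> N P' x y) (HT : forall x, T P x <-> T P' x) :
  graph_iso (Zr P) (Zr P').
Proof.
  assert (I : Inv2 (N P) (T P) (s P) (s P')).
  { constructor.
    - apply Nsym.
    - apply ss.
    - apply ss.
    - apply sN.
    - intros x y h. apply HN. apply sN. apply HN; auto.
    - intros x; apply T_s.
    - intros x. rewrite !HT. apply T_s.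
    - apply T_N.
    - intros x hx. apply nT_sc; auto.
    - intros x hx h. rewrite HT in hx. apply (nT_sc hx).
      apply (@conn_ext V (N P) (N P') (fun a b => proj1 (HN a b))); auto. }
  destruct (coloring I (e P)) as (c & hcN & hcs & hct).
  assert (hcN' : forall x y, ~ T P' x -> N P' x y -> c x = c y).
  { intros x y hx h. apply hcN. rewrite HT; auto. apply HN; auto. }
  assert (hcs' : forall x, ~ T P' x -> c (s P' x) = negb (c x)).
  { intros x hx. apply hct. rewrite HT; auto. }
  set (g := fun x => if excluded_middle_informative (T P x) then x else if c x then s P x else s P' x).
  set (g' := fun x => if excluded_middle_informative (T P x) then x else if c x then s P' x else s P x).
  assert (nTs : forall x, ~ T P x -> ~ T P (s P x)) by (intros x h; rewrite T_s; auto).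
  assert (nTs' : forall x, ~ T P x -> ~ T P (s P' x)) by (intros x h; rewrite HT, T_s, <- HT; auto).
  assert (gT : forall x, T P (g x) <-> T P x).
  { intros x. unfold g. destruct excluded_middle_informative; [tauto|].
    destruct (c x); split; intros h; try contradiction; exfalso; [apply (nTs x)|apply (nTs' x)]; auto. }
  exists g, g'. split; [|split].
  - intros x. unfold g. destruct excluded_middle_informative as [hx|hx].
    + unfold g'. destruct excluded_middle_informative; auto. contradiction.
    + unfold g'. destruct (c x) eqn:E.
      * destruct excluded_middle_informative as [h|h]. exfalso; apply (nTs x); auto.
        rewrite hcs, E; auto. simpl. apply ss.
      * destruct excluded_middle_informative as [h|h]. exfalso; apply (nTs' x); auto.
        rewrite hct, E; auto. simpl. apply ss.
  - intros x. unfold g'. destruct excluded_middle_informative as [hx|hx].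
    + unfold g. destruct excluded_middle_informative; auto. contradiction.
    + unfold g. destruct (c x) eqn:E.
      * destruct excluded_middle_informative as [h|h]. exfalso; apply (nTs' x); auto.
        rewrite hct, E; auto. simpl. apply ss.
      * destruct excluded_middle_informative as [h|h]. exfalso; apply (nTs x); auto.
        rewrite hcs, E; auto. simpl. apply ss.
  - intros x y.
    destruct (classic (T P x)) as [hx|hx]; destruct (classic (T P y)) as [hy|hy].
    + assert (gx : g x = x) by (unfold g; destruct excluded_middle_informative; tauto).
      assert (gy : g y = y) by (unfold g; destruct excluded_middle_informative; tauto).
      rewrite gx, gy, (Zr_onT y hx), (Zr_onT y (proj1 (HT x) hx)). apply HN.
    + split; intros h; exfalso; [apply hy; rewrite <- (Zr_T h); auto|].
      assert (T P' (g x)) by (rewrite <- HT, gT; auto). apply hy, gT. rewrite HT, <- (Zr_T h); auto.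
    + split; intros h; exfalso; [apply hx; rewrite (Zr_T h); auto|].
      assert (T P' (g y)) by (rewrite <- HT, gT; auto). apply hx, gT. rewrite HT, (Zr_T h); auto.
    + assert (hx' : ~ T P' x) by (rewrite <- HT; auto).
      assert (hy' : ~ T P' y) by (rewrite <- HT; auto).
      destruct (@Zr_col V P c hcN hcs x y hx hy) as [A1 A2].
      assert (gx : g x = if c x then s P x else s P' x) by (unfold g; destruct excluded_middle_informative; tauto).
      assert (gy : g y = if c y then s P y else s P' y) by (unfold g; destruct excluded_middle_informative; tauto).
      assert (nT1 : forall z, ~ T P z -> ~ T P' (s P z)) by (intros; rewrite <- HT; auto).
      assert (nT2 : forall z, ~ T P z -> ~ T P' (s P' z)) by (intros; rewrite <- HT; auto).
      rewrite gx, gy.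
      destruct (c x) eqn:Ex; destruct (c y) eqn:Ey.
      * destruct (@Zr_col V P' c hcN' hcs' (s P x) (s P y) (nT1 x hx) (nT1 y hy)) as [B1 _].
        rewrite A1, B1 by (rewrite ?hcs, ?Ex, ?Ey; auto). rewrite <- HN, sN_iff. tauto.
      * destruct (@Zr_col V P' c hcN' hcs' (s P x) (s P' y) (nT1 x hx) (nT2 y hy)) as [_ B2].
        rewrite A2, B2 by (rewrite ?hcs, ?hct, ?Ex, ?Ey; auto; discriminate).
        rewrite ss, <- HN. split; intros [h|h].
        -- left. rewrite h, ss; auto.
        -- right. rewrite <- (ss P y). apply sN in h. auto.
        -- left. rewrite <- h, ss; auto.
        -- right. rewrite <- (ss P x). apply sN; auto.
      * destruct (@Zr_col V P' c hcN' hcs' (s P' x) (s P y) (nT2 x hx) (nT1 y hy)) as [_ B2].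
        rewrite A2, B2 by (rewrite ?hcs, ?hct, ?Ex, ?Ey; auto; discriminate).
        split; intros [h|h].
        -- left. rewrite h. auto.
        -- right. apply HN in h. apply (sN P') in h. auto.
        -- left. apply s_inj in h; auto.
        -- right. apply HN. rewrite <- (ss P' x), <- (ss P' (s P y)). apply sN; auto.
      * destruct (@Zr_col V P' c hcN' hcs' (s P' x) (s P' y) (nT2 x hx) (nT2 y hy)) as [B1 _].
        rewrite A1, B1 by (rewrite ?hct, ?Ex, ?Ey; auto). rewrite sN_iff, HN. tauto.
Qed.

Definition Zre {V} (P : PG V) x z := x = z \/ Zr P x z.

Lemma conn1 {V} (R : V -> V -> Prop) x y : R x y -> conn R x y.
Proof. intros; apply cstep with y; auto; apply cref. Qed.

Lemma twins_s {V} (P : PG V) x z : Zre P x z <-> Zre P (s P x) z.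
Proof.
  unfold Zre, Zr. split.
  - intros [->|[h1 [h|[h|h]]]].
    + destruct (classic (s P z = z)) as [E|E]; [left; auto|right; split; [auto|]]. right; left; auto.
    + destruct (classic (s P x = z)); [left; auto|right; split; [auto|]]. right; right. apply sN; auto.
    + left. rewrite h, ss; auto.
    + destruct (classic (s P x = z)); [left; auto|right; split; [auto|]]. left. rewrite <- (ss P z). apply sN; auto.
  - intros [<-|[h1 [h|[h|h]]]].
    + destruct (classic (x = s P x)) as [E|E]; [left; auto|right; split; [auto|]]. right; left; rewrite ss; auto.
    + destruct (classic (x = z)); [left; auto|right; split; [auto|]]. right; right. rewrite <- (ss P x). apply sN; auto.
    + left. apply s_inj in h; auto.
    + destruct (classic (x = z)); [left; auto|right; split; [auto|]]. left. rewrite sN_iff in h. auto.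
Qed.

Lemma twinA {V} (P : PG V) x y : ~ T P x -> (forall z, Zre P x z <-> Zre P y z) -> N P x y -> False.
Proof.
  intros hx hz hxy.
  assert (Cs := @Csym V P).
  destruct (sep P y hx hxy) as [z [(h1 & h2 & h3)|(h1 & h2 & h3)]].
  - assert (Zre P y z) as [E|[_ [h|[h|h]]]] by (apply hz; right; split; [apply (Nirr P)|left]; auto); auto.
    + subst y. apply hx. apply T_conn with z; [apply tswap|].
      * apply conn_trans with x. apply Cs, conn1; auto. apply conn1; auto.
      * apply Cs, conn1; auto.
    + apply hx. apply T_conn with z; [apply tswap|apply Cs, conn1; auto].
      apply conn_trans with x. apply Cs, conn1; auto. apply conn_trans with y. apply conn1; auto. apply conn1; auto.
  - assert (Zre P x z) as [E|[_ [h|[h|h]]]] by (apply hz; right; split; [apply (Nirr P)|left]; auto); auto.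
    + subst x. apply hx. apply T_s. apply tswap. apply conn_trans with y. apply Cs, conn1; auto. apply Cs, conn1; auto.
    + assert (zx : conn (N P) z x) by (apply conn_trans with y; apply Cs, conn1; auto).
      apply hx. apply T_conn with z; auto. apply tswap.
      apply conn_trans with x; auto. apply conn1; auto.
Qed.

Lemma twin_unique {V} (P : PG V) x y : ~ T P x -> (forall z, Zre P x z <-> Zre P y z) -> y = x \/ y = s P x.
Proof.
  intros hx hz. assert (Zre P y x) as [E|h] by (apply hz; left; auto); auto.
  apply Zr_sym in h. destruct h as [h1 [h|[h|h]]].
  - exfalso; apply (twinA hx hz h).
  - right. rewrite h, ss; auto.
  - exfalso. apply (twinA hx (y:=s P y)); auto. intros z. rewrite hz. apply twins_s.
Qed.

Lemma T_connZ {V} (P : PG V) x : T P x <-> conn (Zr P) (e P) x.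
Proof.
  split; intros h.
  - apply (@conn_ext V (N P) (Zr P)); auto. intros a b hab. split. apply (Nirr P); auto. left; auto.
  - assert (H0 : T P (e P)) by apply cref.
    assert (aux : forall a b, conn (Zr P) a b -> T P a -> T P b).
    { clear. intros a b h. induction h as [a|a b c hab hbc IH]; auto.
      intros ha. apply IH. rewrite <- (Zr_T hab); auto. }
    apply (aux _ _ h H0).
Qed.

Lemma N_col {V} (P : PG V) (c : V -> bool)
  (hN : forall x y, ~ T P x -> N P x y -> c x = c y)
  (hs : forall x, ~ T P x -> c (s P x) = negb (c x)) x y : ~ T P x -> ~ T P y ->
  (N P x y <-> Zr P x y /\ c x = c y).
Proof.
  intros hx hy. destruct (@Zr_col V P c hN hs x y hx hy) as [A1 A2].
  destruct (Bool.bool_dec (c x) (c y)) as [E|E].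
  - rewrite A1; tauto.
  - split; [intros h; exfalso; apply E, hN; auto|tauto].
Qed.

Lemma Zr_swap1 {V} (P : PG V) x y : x <> y -> s P x <> y -> (Zr P (s P x) y <-> Zr P x y).
Proof.
  intros h1 h2. pose proof (twins_s P x y) as H. unfold Zre in H. split; intros h.
  - assert (x = y \/ Zr P x y) as [E|E] by (apply H; right; auto); [contradiction|auto].
  - assert (s P x = y \/ Zr P (s P x) y) as [E|E] by (apply H; right; auto); [contradiction|auto].
Qed.

Lemma Inv2_self {V} (P : PG V) : Inv2 (N P) (T P) (s P) (s P).
Proof.
  constructor; try apply Nsym; try apply ss; try apply sN; try (intros; apply T_s); try apply T_N;
  intros x hx; apply nT_sc; auto.
Qed.

Lemma coreZ2N {V} (P P' : PG V) (HZ : forall x y, Zr P x y <-> Zr P' x y) (HT : forall x, T P x <-> T P' x) :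
  graph_iso (N P) (N P').
Proof.
  assert (HZe : forall a z, Zre P a z <-> Zre P' a z) by (intros; unfold Zre; rewrite HZ; tauto).
  assert (Hs : forall x, ~ T P x -> s P' x = s P x).
  { intros x hx. destruct (twin_unique (y := s P' x) hx) as [E|E]; auto.
    - intros z. rewrite HZe, twins_s, HZe. tauto.
    - exfalso. apply (@nT_ne V P' x); auto. rewrite <- HT; auto. }
  destruct (coloring (Inv2_self P) (e P)) as (c & hcN & hcs & _).
  destruct (coloring (Inv2_self P') (e P)) as (c' & hcN' & hcs' & _).
  assert (hcs2 : forall x, ~ T P x -> c' (s P x) = negb (c' x)).
  { intros x hx. rewrite <- Hs by auto. apply hcs'. rewrite <- HT; auto. }
  assert (nTs : forall x, ~ T P x -> ~ T P (s P x)) by (intros x h; rewrite T_s; auto).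
  set (g := fun x => if excluded_middle_informative (T P x) then x
                     else if Bool.eqb (c x) (c' x) then x else s P x).
  assert (gsel : forall x, ~ T P x -> (c x = c' x /\ g x = x) \/ (c x <> c' x /\ g x = s P x)).
  { intros x hx. unfold g. destruct excluded_middle_informative; [contradiction|].
    destruct (Bool.eqb (c x) (c' x)) eqn:E; [left|right]; split; auto.
    apply Bool.eqb_prop; auto. intro E'; rewrite E' in E. rewrite Bool.eqb_reflx in E. discriminate. }
  assert (gT1 : forall x, T P x -> g x = x).
  { intros x hx. unfold g. destruct excluded_middle_informative; [auto|contradiction]. }
  assert (gT : forall x, T P (g x) <-> T P x).
  { intros x. destruct (classic (T P x)) as [hx|hx]. rewrite gT1; tauto.
    destruct (gsel x hx) as [[_ ->]|[_ ->]]. tauto. split; intros h; [exfalso; apply (nTs x)|]; auto. contradiction. }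
  assert (cg : forall x, ~ T P x -> c' (g x) = c x).
  { intros x hx. destruct (gsel x hx) as [[E ->]|[E ->]]; auto. rewrite hcs2; auto.
    destruct (c x), (c' x); auto; contradiction. }
  assert (gg : forall x, g (g x) = x).
  { intros x. destruct (classic (T P x)) as [hx|hx]. rewrite (gT1 x hx), (gT1 x hx); auto.
    destruct (gsel x hx) as [[E Eg]|[E Eg]]; rewrite Eg; [rewrite Eg; auto|].
    destruct (gsel (s P x) (nTs x hx)) as [[E2 ->]|[E2 ->]]; [|apply ss].
    exfalso. rewrite hcs, hcs2 in E2; auto. apply E. destruct (c x), (c' x); auto. }
  assert (Zg : forall x y, ~ T P x -> ~ T P y -> (Zr P (g x) (g y) <-> Zr P x y)).
  { intros x y hx hy.
    destruct (gsel x hx) as [[Ex ->]|[Ex ->]]; destruct (gsel y hy) as [[Ey ->]|[Ey ->]].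
    - tauto.
    - split; intros h; apply Zr_sym; apply Zr_sym in h; revert h; apply Zr_swap1.
      + intros ->; contradiction.
      + intros <-. rewrite hcs, hcs2 in Ex; auto. apply Ey. destruct (c y), (c' y); auto; discriminate.
      + intros ->; contradiction.
      + intros <-. rewrite hcs, hcs2 in Ex; auto. apply Ey. destruct (c y), (c' y); auto; discriminate.
    - split; intros h; revert h; apply Zr_swap1.
      + intros ->; contradiction.
      + intros <-. rewrite hcs, hcs2 in Ey; auto. apply Ex. destruct (c x), (c' x); auto; discriminate.
      + intros ->; contradiction.
      + intros <-. rewrite hcs, hcs2 in Ey; auto. apply Ex. destruct (c x), (c' x); auto; discriminate.
    - apply Zr_s. }
  exists g, g. split; [auto|split; [auto|]].
  intros x y.
  destruct (classic (T P x)) as [hx|hx]; destruct (classic (T P y)) as [hy|hy].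
  - rewrite (gT1 x hx), (gT1 y hy). rewrite <- (Zr_onT y hx), <- (Zr_onT y (proj1 (HT x) hx)). apply HZ.
  - split; intros h; exfalso.
    + apply hy. rewrite <- (T_N _ _ h); auto.
    + apply hy, gT, HT. rewrite <- (T_N _ _ h). apply HT, gT; auto.
  - split; intros h; exfalso.
    + apply hx. rewrite (T_N _ _ h); auto.
    + apply hx, gT, HT. rewrite (T_N _ _ h). apply HT, gT; auto.
  - assert (hgx : ~ T P' (g x)) by (rewrite <- HT, gT; auto).
    assert (hgy : ~ T P' (g y)) by (rewrite <- HT, gT; auto).
    rewrite (@N_col V P c hcN hcs x y hx hy), (@N_col V P' c' hcN' hcs' _ _ hgx hgy).
    rewrite <- HZ, Zg, !cg; auto. tauto.
Qed.


Lemma tr_conn {V W} (R : V -> V -> Prop) (h : W -> V) (h' : V -> W)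
  (k1 : forall w, h' (h w) = w) (k2 : forall v, h (h' v) = v) x y :
  conn (fun a b => R (h a) (h b)) x y <-> conn R (h x) (h y).
Proof.
  split; intros H.
  - apply (@conn_map W V (fun a b => R (h a) (h b)) R h); auto.
  - rewrite <- (k1 x), <- (k1 y). apply (@conn_map V W R (fun a b => R (h a) (h b)) h'); auto.
    intros a b; rewrite !k2; auto.
Qed.

Definition trPG {V W} (P : PG V) (h : W -> V) (h' : V -> W)
  (k1 : forall w, h' (h w) = w) (k2 : forall v, h (h' v) = v) : PG W.
Proof.
  refine {| N := fun a b => N P (h a) (h b); s := fun a => h' (s P (h a)); e := h' (e P) |}.
  - intros x y H; apply Nsym; auto.
  - intros x y H E; apply (Nirr P H); rewrite E; auto.
  - intros x; rewrite k2, ss; auto.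
  - intros x y H; rewrite !k2; apply sN; auto.
  - rewrite k2, se; auto.
  - intros x H. rewrite tr_conn in H |- *; auto. rewrite k2 in *. apply tswap; auto.
  - intros x y hx hy hne hs. rewrite tr_conn, k2 in hx, hy; auto.
    apply (onT P); auto. intro E; apply hne; rewrite <- (k1 x), <- (k1 y), E; auto.
    destruct hs as [E|E]; [left; rewrite E, k2; auto|right; rewrite k2 in E; auto].
  - intros x H. rewrite tr_conn, k2 in H; auto. destruct (dom_e P H) as [E|E].
    + left. rewrite <- (k1 x), E; auto.
    + right. rewrite k2; auto.
  - intros x y hx H. rewrite tr_conn, k2 in hx; auto. destruct (sep P (h y) hx H) as [z Hz].
    exists (h' z). rewrite k2. destruct Hz as [(a1&a2&a3)|(a1&a2&a3)]; [left|right]; repeat split; auto;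
      intro E; apply a2; rewrite E, k2; auto.
  - intros u hu hd. rewrite tr_conn, k2 in hu; auto.
    destruct (enum P hu) as (p & p0 & pinj & pc & pN).
    { intros y' hy'. rewrite <- (k2 y') in hy' |- *. rewrite <- tr_conn in hy'; auto.
      destruct (hd _ hy') as [E|E]; [left; rewrite E; auto|right; auto]. }
    exists (fun k => h' (p k)). split; [|split; [|split]].
    + rewrite p0, k1; auto.
    + intros i j E. apply pinj. rewrite <- (k2 (p i)), <- (k2 (p j)), E; auto.
    + intros y; split.
      intros Hc. rewrite tr_conn in Hc; auto. apply pc in Hc. destruct Hc as [k E]. exists k.
      rewrite <- (k1 y), E; auto.
      intros [k ->]. rewrite tr_conn, k2; auto. apply pc. exists k; auto.
    + intros i j; split.
      intros Hc. cbv beta in Hc. rewrite !k2 in Hc. apply pN; auto.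
      intros Hc. cbv beta. rewrite !k2. apply pN; auto.
Defined.

Lemma trZ {V W} (P : PG V) (h : W -> V) (h' : V -> W) k1 k2 x y :
  Zr (trPG P h h' k1 k2) x y <-> Zr P (h x) (h y).
Proof.
  unfold Zr; simpl. rewrite !k2. split; intros [h1 h2]; split.
  - intro E; apply h1; rewrite <- (k1 x), <- (k1 y), E; auto.
  - destruct h2 as [a|[a|a]]; auto. right; left. rewrite a, k2; auto.
  - intro E; apply h1; rewrite E; auto.
  - destruct h2 as [a|[a|a]]; auto. right; left. rewrite <- a, k1; auto.
Qed.

Lemma iso_tr_N {V W} (P : PG V) (h : W -> V) (h' : V -> W) k1 k2 :
  graph_iso (N (trPG P h h' k1 k2)) (N P).
Proof. exists h, h'; repeat split; auto; simpl; auto. Qed.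

Lemma iso_tr_Z {V W} (P : PG V) (h : W -> V) (h' : V -> W) k1 k2 :
  graph_iso (Zr (trPG P h h' k1 k2)) (Zr P).
Proof. exists h, h'; split; [auto|split; [auto|]]; intros; apply trZ. Qed.

Lemma swap_aut {V X} (x0 : X) (R : V -> V -> Prop) (r1 r2 : X -> V) (Rel : X -> X -> Prop)
  (i1 : forall a b, r1 a = r1 b -> a = b) (i2 : forall a b, r2 a = r2 b -> a = b)
  (d12 : forall a b, r1 a <> r2 b)
  (R1 : forall a b, R (r1 a) (r1 b) <-> Rel a b) (R2 : forall a b, R (r2 a) (r2 b) <-> Rel a b)
  (c1 : forall x y, R x y -> ((exists a, x = r1 a) <-> (exists a, y = r1 a)))
  (c2 : forall x y, R x y -> ((exists a, x = r2 a) <-> (exists a, y = r2 a))) :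
  exists tau : V -> V, (forall x, tau (tau x) = x) /\ (forall x y, R x y <-> R (tau x) (tau y)) /\
    (forall a, tau (r1 a) = r2 a).
Proof.
  set (idx := fun (r : X -> V) x => epsilon (inhabits x0) (fun a => x = r a)).
  assert (idx_spec : forall r x, (exists a, x = r a) -> x = r (idx r x)).
  { intros r x H. apply (epsilon_spec (inhabits x0) (fun a => x = r a)); auto. }
  assert (idx_r : forall r a, (forall a b, r a = r b -> a = b) -> idx r (r a) = a).
  { intros r a hr. symmetry; apply hr. apply idx_spec. exists a; auto. }
  set (tau := fun x => if excluded_middle_informative (exists a, x = r1 a) then r2 (idx r1 x)
               else if excluded_middle_informative (exists a, x = r2 a) then r1 (idx r2 x) else x).
  assert (t1 : forall a, tau (r1 a) = r2 a).
  { intros a. unfold tau. destruct excluded_middle_informative as [_|n]. rewrite idx_r; auto.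
    exfalso; apply n; exists a; auto. }
  assert (t2 : forall a, tau (r2 a) = r1 a).
  { intros a. unfold tau. destruct excluded_middle_informative as [[b E]|_].
    exfalso; apply (d12 b a); auto.
    destruct excluded_middle_informative as [_|n]. rewrite idx_r; auto.
    exfalso; apply n; exists a; auto. }
  assert (t3 : forall x, ~ (exists a, x = r1 a) -> ~ (exists a, x = r2 a) -> tau x = x).
  { intros x n1 n2. unfold tau. destruct excluded_middle_informative; [contradiction|].
    destruct excluded_middle_informative; [contradiction|auto]. }
  assert (tt : forall x, tau (tau x) = x).
  { intros x. destruct (classic (exists a, x = r1 a)) as [[a ->]|n1].
    rewrite t1, t2; auto.
    destruct (classic (exists a, x = r2 a)) as [[a ->]|n2].
    rewrite t2, t1; auto. rewrite (t3 x n1 n2), (t3 x n1 n2); auto. }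
  assert (fw : forall x y, R x y -> R (tau x) (tau y)).
  { intros x y H. destruct (classic (exists a, x = r1 a)) as [[a Ea]|n1].
    - destruct (proj1 (c1 x y H) (ex_intro _ a Ea)) as [b Eb]. subst. rewrite !t1.
      apply R2, R1; auto.
    - assert (n1' : ~ exists a, y = r1 a) by (intro h; apply n1, (c1 x y H); auto).
      destruct (classic (exists a, x = r2 a)) as [[a Ea]|n2].
      + destruct (proj1 (c2 x y H) (ex_intro _ a Ea)) as [b Eb]. subst. rewrite !t2.
        apply R1, R2; auto.
      + assert (n2' : ~ exists a, y = r2 a) by (intro h; apply n2, (c2 x y H); auto).
        rewrite (t3 x n1 n2), (t3 y n1' n2'); auto. }
  exists tau. split; [auto|split; [|auto]].
  intros x y; split; auto. intros H. apply fw in H. rewrite !tt in H; auto.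
Qed.

Definition DD (a b : nat * bool) : Prop :=
  if Bool.eqb (snd a) (snd b) then Dv (S (fst a)) (S (fst b))
  else (fst a = fst b \/ Dv (S (fst a)) (S (fst b))).

Lemma Dv_sym i j : Dv i j -> Dv j i.
Proof. intros [h1 [h|h]]; split; auto. Qed.

Lemma connZ_split {V} (P : PG V) a b : conn (Zr P) a b -> conn (N P) a b \/ conn (N P) a (s P b).
Proof.
  induction 1 as [a|a c b hac hcb IH]. left; apply cref.
  assert (H1 : conn (N P) a c \/ conn (N P) a (s P c)).
  { destruct hac as [_ [h|[h|h]]]. left; apply conn1; auto. right; rewrite h; apply cref. right; apply conn1; auto. }
  destruct H1 as [H1|H1]; destruct IH as [IH|IH].
  - left; eapply conn_trans; eauto.
  - right; eapply conn_trans; eauto.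
  - right. eapply conn_trans; eauto. apply (connF (sN P)); auto.
  - left. eapply conn_trans; eauto. apply (connF (sN P)) in IH. rewrite ss in IH; auto.
Qed.

Lemma zenum {V} (P : PG V) u : ~ T P u -> (forall y, conn (Zr P) u y -> y = u \/ Zr P u y) ->
  exists q : nat * bool -> V, q (0, false) = u /\ (forall a b, q a = q b -> a = b) /\
    (forall y, conn (Zr P) u y <-> exists a, y = q a) /\ (forall a b, Zr P (q a) (q b) <-> DD a b).
Proof.
  intros hu hd.
  assert (NZ : forall x y, N P x y -> Zr P x y) by (intros x y h; split; [apply (Nirr P)|left]; auto).
  assert (hdN : forall y, conn (N P) u y -> y = u \/ N P u y).
  { intros y hy. destruct (hd y) as [E|[h1 [h|[h|h]]]]; auto.
    - apply (@conn_ext V (N P) (Zr P)); auto.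
    - exfalso. apply hu. apply tswap. replace (s P u) with y by (rewrite h, ss; auto). auto.
    - exfalso. apply hu. apply T_conn with y; [|apply Csym; auto]. apply tswap.
      apply conn_trans with u; [apply Csym; auto|apply conn1; auto]. }
  destruct (enum P hu hdN) as (p & p0 & pinj & pc & pN).
  assert (cu : forall k, conn (N P) u (p k)) by (intros k; apply pc; exists k; auto).
  assert (ncu : forall k, ~ conn (N P) u (s P (p k))).
  { intros k h. apply hu. apply T_conn with (p k); [|apply Csym; auto]. apply tswap.
    apply conn_trans with u; auto. apply Csym; auto. }
  assert (Zpp : forall i j, Zr P (p i) (s P (p j)) <-> i = j \/ Dv (S i) (S j)).
  { intros i j. unfold Zr. rewrite ss. split.
    - intros [_ [h|[h|h]]].
      + exfalso. apply (ncu j). apply conn_trans with (p i); auto. apply conn1; auto.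
      + left. apply pinj; auto.
      + right. apply pN; auto.
    - intros h. split. intro E. apply (ncu j). rewrite <- E. auto.
      destruct h as [->|h]; [right; left; auto|right; right; apply pN; auto]. }
  exists (fun a : nat * bool => if snd a then s P (p (fst a)) else p (fst a)).
  split; [simpl; auto|split; [|split]].
  - intros [i b] [j b']; simpl. destruct b, b'; intros E.
    + apply s_inj, pinj in E; subst; auto.
    + exfalso. apply (ncu i). rewrite E; auto.
    + exfalso. apply (ncu j). rewrite <- E; auto.
    + apply pinj in E; subst; auto.
  - intros y; split.
    + intros h. destruct (connZ_split h) as [h'|h']; apply pc in h'; destruct h' as [k E].
      * exists (k, false); auto.
      * exists (k, true); simpl. rewrite <- E, ss; auto.
    + intros [[k b] ->]. simpl. destruct b.
      * apply conn_snoc with (p k). apply (@conn_ext V (N P) (Zr P)); auto.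
        split. intro E. apply (ncu k). rewrite <- E. auto.
        right; left; rewrite ss; auto.
      * apply (@conn_ext V (N P) (Zr P)); auto.
  - intros [i b] [j b']; unfold DD; simpl. destruct b, b'; simpl.
    + rewrite Zr_s. unfold Zr. split.
      * intros [h1 [h|[h|h]]]; [apply pN; auto| |]; exfalso.
        -- apply (ncu j). rewrite <- h; auto.
        -- apply (ncu j). apply conn_trans with (p i); auto. apply conn1; auto.
      * intros h. split. intro E. apply pinj in E. subst. destruct h; auto. left; apply pN; auto.
    + split; intros h. apply Zr_sym, Zpp in h. destruct h; auto. right; apply Dv_sym; auto.
      apply Zr_sym, Zpp. destruct h; auto. right; apply Dv_sym; auto.
    + apply Zpp.
    + unfold Zr. split.
      * intros [h1 [h|[h|h]]]; [apply pN; auto| |]; exfalso.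
        -- apply (ncu j). rewrite <- h; auto.
        -- apply (ncu j). apply conn_trans with (p i); auto. apply conn1; auto.
      * intros h. split. intro E. apply pinj in E. subst. destruct h; auto. left; apply pN; auto.
Qed.

Lemma N2Z_main {V W} (P : PG V) (Q : PG W) : graph_iso (N P) (N Q) -> graph_iso (Zr P) (Zr Q).
Proof.
  intros (f & g & fg & gf & hf).
  set (P' := trPG Q f g fg gf).
  assert (HN : forall x y, N P x y <-> N P' x y) by (intros; simpl; apply hf).
  assert (CN : forall a b, conn (N P) a b <-> conn (N P') a b)
    by (intros; split; apply conn_ext; intros; apply HN; auto).
  apply (graph_iso_trans (R2 := Zr P')); [|apply iso_tr_Z].
  destruct (classic (T P (e P'))) as [hT|hT].
  - apply coreN2Z; auto. intros x. unfold T. rewrite <- CN. split; intros h.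
    + eapply conn_trans; [apply Csym|]; eauto.
    + eapply conn_trans; eauto.
  - assert (hT' : ~ T P' (e P)).
    { intros h. apply hT. unfold T in *. rewrite CN. apply (@Csym V P'); auto. }
    assert (hdom1 : forall y, conn (N P') (e P) y -> y = e P \/ N P' (e P) y).
    { intros y h. rewrite <- CN in h. destruct (dom_e P h) as [E|E]; auto. right; apply HN; auto. }
    assert (hdom2 : forall y, conn (N P) (e P') y -> y = e P' \/ N P (e P') y).
    { intros y h. rewrite CN in h. destruct (dom_e P' h) as [E|E]; auto. right; apply HN; auto. }
    destruct (enum P' hT' hdom1) as (p1 & p10 & p1i & p1c & p1N).
    destruct (enum P hT hdom2) as (p2 & p20 & p2i & p2c & p2N).
    destruct (@swap_aut V nat 0 (N P) p1 p2 (fun i j => Dv (S i) (S j)) p1i p2i) as (tau & tt & tN & t1).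
    + intros a b E. apply hT. unfold T. apply conn_trans with (p1 a).
      rewrite CN. apply p1c; exists a; auto. rewrite E. apply Csym. apply p2c. exists b; auto.
    + intros a b. rewrite HN. apply p1N.
    + apply p2N.
    + intros x y h. rewrite <- !p1c, <- !CN. split; intros h'.
      * apply conn_snoc with x; auto.
      * apply conn_snoc with y; auto. apply Nsym; auto.
    + intros x y h. rewrite <- !p2c. split; intros h'.
      * apply conn_snoc with x; auto.
      * apply conn_snoc with y; auto. apply Nsym; auto.
    + set (P'' := trPG P' tau tau tt tt).
      apply (graph_iso_trans (R2 := Zr P'')); [|apply iso_tr_Z].
      apply coreN2Z.
      * intros x y. rewrite tN, HN. reflexivity.
      * assert (E : e P'' = e P) by (change (tau (e P') = e P); rewrite <- p20, <- t1, tt, p10; auto).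
        intros x. unfold T. rewrite E. split; apply conn_ext; intros a b h.
        -- change (N P' (tau a) (tau b)). apply HN, (proj1 (tN a b)); auto.
        -- change (N P' (tau a) (tau b)) in h. apply (proj2 (tN a b)), HN; auto.
Qed.

Lemma Z2N_main {V W} (P : PG V) (Q : PG W) : graph_iso (Zr P) (Zr Q) -> graph_iso (N P) (N Q).
Proof.
  intros (f & g & fg & gf & hf).
  set (P' := trPG Q f g fg gf).
  assert (HZ : forall x y, Zr P x y <-> Zr P' x y) by (intros; unfold P'; rewrite trZ; apply hf).
  assert (CZ : forall a b, conn (Zr P) a b <-> conn (Zr P') a b)
    by (intros; split; apply conn_ext; intros; apply HZ; auto).
  assert (CZs : forall (R : PG V) a b, conn (Zr R) a b -> conn (Zr R) b a)
    by (intros; apply conn_sym; auto; intros; apply Zr_sym; auto).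
  apply (graph_iso_trans (R2 := N P')); [|apply iso_tr_N].
  destruct (classic (T P (e P'))) as [hT|hT].
  - apply coreZ2N; auto. intros x. rewrite !T_connZ, <- CZ. rewrite T_connZ in hT. split; intros h.
    + eapply conn_trans; [apply CZs|]; eauto.
    + eapply conn_trans; eauto.
  - assert (hT' : ~ T P' (e P)).
    { intros h. apply hT. rewrite T_connZ in *. rewrite CZ. apply CZs; auto. }
    assert (hdom1 : forall y, conn (Zr P') (e P) y -> y = e P \/ Zr P' (e P) y).
    { intros y h. rewrite <- CZ, <- T_connZ in h. destruct (dom_e P h) as [E|E]; auto.
      right; apply HZ. split. apply (Nirr P); auto. left; auto. }
    assert (hdom2 : forall y, conn (Zr P) (e P') y -> y = e P' \/ Zr P (e P') y).
    { intros y h. rewrite CZ, <- T_connZ in h. destruct (dom_e P' h) as [E|E]; auto.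
      right; apply HZ. split. apply (Nirr P'); auto. left; auto. }
    destruct (zenum hT' hdom1) as (p1 & p10 & p1i & p1c & p1N).
    destruct (zenum hT hdom2) as (p2 & p20 & p2i & p2c & p2N).
    destruct (@swap_aut V (nat * bool) (0, false) (Zr P) p1 p2 DD p1i p2i) as (tau & tt & tN & t1).
    + intros a b E. apply hT. rewrite T_connZ. apply conn_trans with (p1 a).
      rewrite CZ. apply p1c; exists a; auto. rewrite E. apply CZs. apply p2c. exists b; auto.
    + intros a b. rewrite HZ. apply p1N.
    + apply p2N.
    + intros x y h. rewrite <- !p1c, <- !CZ. split; intros h'.
      * apply conn_snoc with x; auto.
      * apply conn_snoc with y; auto. apply Zr_sym; auto.
    + intros x y h. rewrite <- !p2c. split; intros h'.
      * apply conn_snoc with x; auto.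
      * apply conn_snoc with y; auto. apply Zr_sym; auto.
    + set (P'' := trPG P' tau tau tt tt).
      apply (graph_iso_trans (R2 := N P'')); [|apply iso_tr_N].
      assert (HZ2 : forall x y, Zr P x y <-> Zr P'' x y) by (intros x y; unfold P''; rewrite trZ, tN, HZ; reflexivity).
      apply coreZ2N; auto.
      assert (E : e P'' = e P) by (change (tau (e P') = e P); rewrite <- p20, <- t1, tt, p10; auto).
      intros x. rewrite !T_connZ, E. split; apply conn_ext; intros a b h; apply HZ2; auto.
Qed.

Unset Implicit Arguments.

Theorem mainTheorem5 (G H : loop) :
  power_associative G -> power_associative H ->
  (graph_iso (@Npow_adj G) (@Npow_adj H) <-> graph_iso (@Zpow_adj G) (@Zpow_adj H)).
Proof.
  intros PG_ PH. split; intros h.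
  - apply (@graph_iso_ext G H (Zr (loopPG PG_)) _ (Zr (loopPG PH)) _).
    + intros; symmetry; apply loop_Zr.
    + intros; symmetry; apply loop_Zr.
    + apply N2Z_main. exact h.
  - apply (Z2N_main (P := loopPG PG_) (Q := loopPG PH)).
    apply (@graph_iso_ext G H (@Zpow_adj G) _ (@Zpow_adj H) _); auto; intros; apply loop_Zr.
Qed.
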